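(* Let $N\ge 2$ be an integer and $\tau>0$. For $t\in\{0,\tau,2\tau,\dots\}$ let $u_j^t=u(j,t)$, $j=0,\dots,N$, be defined by prescribed initial values $u(j,0)$, the Dirichlet boundary condition $u_0^t=u_N^t=0$ for all $t$ (in particular $u(0,0)=u(N,0)=0$), and the iteration, for $j=1,\dots,N-1$, $$u_j^{t+\tau}=u_j^t+\frac{u_j^tu_{j-1}^t}{2}\bigl(u_j^t+u_{j-1}^t-1\bigr)\bigl(u_{j-1}^t-u_j^t\bigr)+\frac{u_j^tu_{j+1}^t}{2}\bigl(u_j^t+u_{j+1}^t-1\bigr)\bigl(u_{j+1}^t-u_j^t\bigr).$$ Suppose $1/2\le u(j,0)\le 1$ for $j=1,\dots,N-1$. Then for every $j=1,\dots,N-1$, $$\lim_{t\to\infty}u(j,t)=\frac{1}{N-1}\sum_{i=1}^{N-1}u(i,0).$$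
   Context: Aggregation–diffusion lattice model on the grid points $x_j=j/N$ with time step $\tau$; the limit is taken along $t\in\{0,\tau,2\tau,\dots\}$. *)

(* Defs.v *)
From HB Require Import structures.
From mathcomp Require Import all_boot all_order all_algebra.
From mathcomp Require Import all_classical all_reals all_analysis.
Set Implicit Arguments. Unset Strict Implicit. Unset Printing Implicit Defensive.
Import Order.TTheory GRing.Theory Num.Theory.
Local Open Scope ring_scope.

Definition lattice_step {R : fieldType} (a b c : R) : R :=
  b + (b * a / 2%:R) * (b + a - 1) * (a - b)
    + (b * c / 2%:R) * (b + c - 1) * (c - b).

(* Main.v *)
Require Import Defs.
From HB Require Import structures.
From mathcomp Require Import all_boot all_order all_algebra.
From mathcomp Require Import all_classical all_reals all_analysis.
From mathcomp Require Import ring lra zify.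
Set Implicit Arguments. Unset Strict Implicit.
Import Order.TTheory GRing.Theory Num.Theory.
Import numFieldNormedType.Exports.
Local Open Scope classical_set_scope.
Local Open Scope ring_scope.

Section Alg.
Variable R : realFieldType.
Definition DD (a b : R) := a * b * (a + b - 1) / 2%:R.

Definition inI (x : R) := 1 / 2%:R <= x <= 1.
Definition inI0 (x : R) := x = 0 \/ inI x.

Lemma DD_bnd a b : inI0 a -> inI b -> 0 <= DD a b <= 1/2%:R.
Proof.
rewrite /inI0 /inI /DD => -[->|/andP[a1 a2]] /andP[b1 b2].
  by rewrite !mul0r lexx /=; lra.
have h1 : 0 <= a * b by nra.
have h2 : a * b <= 1 by nra.
have h3 : 0 <= a + b - 1 by lra.
have h4 : a + b - 1 <= 1 by lra.
apply/andP; split; first by apply: divr_ge0 => //; nra.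
have : a * b * (a + b - 1) <= 1 by nra.
lra.
Qed.

Lemma DD0l b : DD 0 b = 0.
Proof. by rewrite /DD !mul0r. Qed.
Lemma DD0r b : DD b 0 = 0.
Proof. by rewrite /DD mulr0 !mul0r. Qed.
Lemma DDC a b : DD a b = DD b a.
Proof. by rewrite /DD; congr (_ / _); ring. Qed.

Lemma step_DD a b c :
  lattice_step a b c = b + DD b c * (c - b) - DD a b * (b - a).
Proof. by rewrite /lattice_step /DD; field. Qed.

Lemma step_inv a b c : inI0 a -> inI b -> inI0 c -> inI (lattice_step a b c).
Proof.
move=> ha hb hc.
have /andP[p0 p1] := @DD_bnd a b ha hb.
have /andP[q0 q1] : 0 <= DD c b <= 1/2%:R by apply: DD_bnd.
rewrite step_DD (DDC b c).
have hp : DD a b = 0 \/ inI a.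
  case: ha => [->|]; [left; exact: DD0l | by right].
have hq : DD c b = 0 \/ inI c.
  case: hc => [->|]; [left; exact: DD0l | by right].
set p := DD a b in p0 p1 hp *; set q := DD c b in q0 q1 hq *.
move: hb; rewrite /inI => /andP[b1 b2].
have ee : 1 - p - q >= 0 by lra.
have e1 : 0 <= (1 - p - q) * (b - 1/2%:R) by nra.
have e2 : 0 <= (1 - p - q) * (1 - b) by nra.
rewrite /inI; case: hp => [->|/andP[a1 a2]]; case: hq => [->|/andP[c1 c2]];
  apply/andP; split; nra.
Qed.

Lemma edge_bound a b : inI a -> inI b ->
  2%:R * DD a b * (b - a) ^+ 2 * (1 - 2%:R * DD a b) >= (b - a) ^+ 4 / 8%:R.
Proof.
wlog ab : a b / a <= b.
  move=> H ha hb; case: (lerP a b) => [h|h]; first exact: H.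
  rewrite DDC; have -> : (b - a) ^+ 2 = (a - b) ^+ 2 by ring.
  have -> : (b - a) ^+ 4 = (a - b) ^+ 4 by ring.
  by apply: H => //; apply: ltW.
rewrite /inI => /andP[a1 a2] /andP[b1 b2].
set g := b - a.
have g0 : 0 <= g by rewrite /g; lra.
have hD1 : DD a b >= g / 8%:R.
  rewrite /DD /g.
  have : a * b >= 1/4%:R by nra.
  have : a + b - 1 >= b - a by lra.
  move=> h1 h2.
  have : a * b * (a + b - 1) >= 1/4%:R * (b - a) by nra.
  lra.
have hD2 : 1 - 2%:R * DD a b >= g.
  rewrite /DD /g.
  have h1 : b * (a + b - 1) <= 1 by nra.
  have : a * (b * (a + b - 1)) <= a * 1 by apply: ler_wpM2l => //; lra.
  rewrite mulr1 mulrA.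
  lra.
set D := DD a b in hD1 hD2 *.
have : D * (1 - 2%:R * D) >= g ^+ 2 / 8%:R.
  have h : 0 <= (D - g / 8%:R) * (1 - 2%:R * D) by nra.
  have h' : 0 <= g / 8%:R * (1 - 2%:R * D - g) by nra.
  rewrite expr2; nra.
move=> h.
have g2 : 0 <= g ^+ 2 by apply: sqr_ge0.
have : g ^+ 2 * (g ^+ 2 / 8%:R) <= g ^+ 2 * (D * (1 - 2%:R * D)) by apply: ler_wpM2l.
have -> : g ^+ 4 / 8%:R = g ^+ 2 * (g ^+ 2 / 8%:R) by rewrite mulrA -exprD.
have -> : 2%:R * D * g ^+ 2 * (1 - 2%:R * D) = 2%:R * (g ^+ 2 * (D * (1 - 2%:R * D))) by ring.
set X := g ^+ 2 * (g ^+ 2 / 8%:R).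
have : 0 <= X by rewrite /X; apply: mulr_ge0 => //; apply: divr_ge0.
lra.
Qed.
End Alg.

Section Seq.
Variable R : realType.
Variable N : nat.
Variable w : nat -> nat -> R.
Hypothesis N2 : (2 <= N)%N.
Hypothesis hb0 : forall n, w n 0 = 0.
Hypothesis hbN : forall n, w n N = 0.
Hypothesis hstep : forall n j, (1 <= j <= N.-1)%N ->
  w n.+1 j = lattice_step (w n j.-1) (w n j) (w n j.+1).
Hypothesis hinit : forall j, (1 <= j <= N.-1)%N -> inI (w 0 j).

Lemma inv n j : (1 <= j <= N.-1)%N -> inI (w n j).
Proof.
elim: n j => [|n IH] j hj; first exact: hinit.
have nb : forall k, (k <= N)%N -> inI0 (w n k).
  move=> k hk; rewrite /inI0; case: (posnP k) => [->|k0]; first by left; exact: hb0.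
  case: (ltnP k N) => kN; last by (have -> : k = N by lia); left; exact: hbN.
  by right; apply: IH; rewrite k0 /=; rewrite -ltnS prednK //; lia.
rewrite hstep //; apply: step_inv.
- apply: nb; lia.
- exact: IH.
- apply: nb; lia.
Qed.

Definition F n k := DD (w n k) (w n k.+1) * (w n k.+1 - w n k).

Lemma stepF n j : (1 <= j <= N.-1)%N -> w n.+1 j = w n j + F n j - F n j.-1.
Proof.
move=> hj; rewrite hstep // step_DD /F prednK //; lia.
Qed.

Lemma F0 n : F n 0 = 0.
Proof. by rewrite /F hb0 DD0l mul0r. Qed.

Lemma FN n : F n N.-1 = 0.
Proof. by rewrite /F prednK ?hbN ?DD0r ?mul0r //; lia. Qed.

Lemma sum_cons n : \sum_(1 <= i < N) w n.+1 i = \sum_(1 <= i < N) w n i.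
Proof.
rewrite (eq_big_nat _ _ (F2 := fun i => w n i + (F n i - F n i.-1))); last first.
  move=> i hi; rewrite stepF; [by rewrite addrA | lia].
rewrite big_split /= big_add1 /= telescope_sumr ?F0 ?FN ?subr0 ?addr0 //; lia.
Qed.

Lemma sum_cons0 n : \sum_(1 <= i < N) w n i = \sum_(1 <= i < N) w 0 i.
Proof. by elim: n => // n IH; rewrite sum_cons. Qed.


Definition E n := \sum_(1 <= i < N) w n i ^+ 2.
Definition S n := \sum_(1 <= k < N.-1) (w n k.+1 - w n k) ^+ 4.
Definition A n k := 2%:R * w n k * F n k + 2%:R * F n k ^+ 2.
Definition B n k := 2%:R * w n k.+1 * F n k - 2%:R * F n k ^+ 2.

Lemma site n j : (1 <= j <= N.-1)%N ->
  w n.+1 j ^+ 2 <= w n j ^+ 2 + A n j - B n j.-1.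
Proof.
move=> hj; rewrite stepF // /A /B prednK; last by lia.
set x := w n j; set f := F n j; set g := F n j.-1.
have : 0 <= (f + g) ^+ 2 by apply: sqr_ge0.
move=> h.
have -> : (x + f - g) ^+ 2 = x ^+ 2 + 2%:R * x * f + 2%:R * f ^+ 2 - (2%:R * x * g - 2%:R * g ^+ 2) - (f + g) ^+ 2 by ring.
lra.
Qed.

Lemma edge n k : (1 <= k < N.-1)%N -> A n k - B n k <= - ((w n k.+1 - w n k) ^+ 4 / 8%:R).
Proof.
move=> hk.
have ha : inI (w n k) by apply: inv; lia.
have hb : inI (w n k.+1) by apply: inv; lia.
have := edge_bound ha hb.
rewrite /A /B /F.
set D := DD _ _; set a := w n k; set b := w n k.+1.
have -> : 2%:R * a * (D * (b - a)) + 2%:R * (D * (b - a)) ^+ 2 -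
   (2%:R * b * (D * (b - a)) - 2%:R * (D * (b - a)) ^+ 2) =
   - (2%:R * D * (b - a) ^+ 2 * (1 - 2%:R * D)) by ring.
rewrite lerN2 //.
Qed.

Lemma Edec n : E n.+1 <= E n - S n / 8%:R.
Proof.
rewrite /E.
apply: (le_trans (ler_sum_nat (G := fun j => w n j ^+ 2 + A n j - B n j.-1) _)).
  move=> i hi; apply: site; lia.
rewrite sumrB big_split /=.
have -> : \sum_(1 <= i < N) A n i = \sum_(1 <= i < N.-1) A n i.
  rewrite -{1}(prednK (n := N)); last by lia.
  rewrite big_nat_recr /=; last by lia.
  by rewrite /A FN mulr0 expr0n /= mulr0 !addr0.
have -> : \sum_(1 <= i < N) B n i.-1 = \sum_(1 <= i < N.-1) B n i.
  rewrite big_add1 /= big_ltn; last by lia.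
  by rewrite /B F0 mulr0 expr0n /= mulr0 subr0 add0r.
rewrite -addrA lerD2l -sumrB /S mulr_suml -sumrN.
apply: ler_sum_nat => i hi.
exact: edge.
Qed.

Lemma E_ge0 n : 0 <= E n.
Proof. by apply: sumr_ge0 => i _; apply: sqr_ge0. Qed.

Lemma S_ge0 n : 0 <= S n.
Proof.
apply: sumr_ge0 => i _.
have -> : (w n i.+1 - w n i) ^+ 4 = ((w n i.+1 - w n i) ^+ 2) ^+ 2 by rewrite -exprM.
exact: sqr_ge0.
Qed.

Lemma series_bnd n : \sum_(0 <= k < n) S k <= 8%:R * (E 0 - E n).
Proof.
elim: n => [|n IH]; first by rewrite big_geq // subrr mulr0.
rewrite big_nat_recr //=.
have := Edec n; lra.
Qed.

Lemma S_cvg : S n @[n --> \oo] --> 0.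
Proof.
apply: cvg_series_cvg_0.
apply: nondecreasing_is_cvgn.
  apply/nondecreasing_seqP => n.
  rewrite /series /= big_nat_recr //=.
  have := S_ge0 n; lra.
exists (8%:R * E 0) => _ [n _ <-].
rewrite /series /=.
apply: (le_trans (series_bnd n)).
have := E_ge0 n; lra.
Qed.

Lemma small_edge n k d : 0 < d -> S n < d ^+ 4 -> (1 <= k < N.-1)%N ->
  `|w n k.+1 - w n k| < d.
Proof.
move=> d0 hS hk.
set g := w n k.+1 - w n k.
have hg : g ^+ 4 <= S n.
  rewrite /S (bigD1_seq k) /=; last exact: iota_uniq.
  - rewrite lerDl; apply: sumr_ge0 => i _.
    have -> : (w n i.+1 - w n i) ^+ 4 = ((w n i.+1 - w n i) ^+ 2) ^+ 2 by rewrite -exprM.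
    exact: sqr_ge0.
  - by rewrite mem_index_iota; lia.
have : `|g| ^+ 4 < d ^+ 4.
  have -> : `|g| ^+ 4 = g ^+ 4.
    by rewrite -normrX ger0_norm // -[4%N]/(2 * 2)%N exprM; apply: sqr_ge0.
  exact: le_lt_trans hg hS.
rewrite ltr_pXn2r // nnegrE //; exact: ltW.
Qed.

Lemma chain n (d : R) : (forall k, (1 <= k < N.-1)%N -> `|w n k.+1 - w n k| < d) ->
  forall m i, (1 <= i)%N -> (i + m <= N.-1)%N -> `|w n (i + m) - w n i| <= m%:R * d.
Proof.
move=> hd; elim=> [|m IH] i hi hm.
  by rewrite addn0 subrr normr0 mul0r.
rewrite addnS (le_trans (ler_distD (w n (i + m)) _ _)) //.
rewrite -nat1r mulrDl mul1r lerD //; last by apply: IH; lia.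
apply: ltW; apply: hd; lia.
Qed.

Lemma main j : (1 <= j <= N.-1)%N ->
  w n j @[n --> \oo] --> (\sum_(1 <= i < N) w 0 i) / (N.-1)%:R.
Proof.
move=> hj; apply/cvgrPdist_lt => e e0.
set d := e / (2 * N)%:R.
have d0 : 0 < d by rewrite /d divr_gt0 // ltr0n; lia.
have H : \forall t \near \oo, `|0 - S t| < d ^+ 4.
  by move/cvgrPdist_lt: S_cvg; apply; exact: exprn_gt0.
apply: (filterS _ H) => n /= hn.
have hS : S n < d ^+ 4.
  by move: hn; rewrite sub0r normrN ger0_norm //; exact: S_ge0.
have he := small_edge d0 hS.
have hc := chain he.
have hij : forall i, (1 <= i <= N.-1)%N -> `|w n i - w n j| <= N%:R * d.
  move=> i hi.
  case: (leqP i j) => hle.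
  - rewrite distrC -(subnKC hle) (le_trans (hc _ _ _ _)) //; try lia.
    by rewrite ler_wpM2r ?(ltW d0) // ler_nat; lia.
  - rewrite -(subnKC (ltnW hle)) (le_trans (hc _ _ _ _)) //; try lia.
    by rewrite ler_wpM2r ?(ltW d0) // ler_nat; lia.
have NN : (0 < N.-1)%N by lia.
have NR : (N.-1)%:R != 0 :> R by rewrite pnatr_eq0; lia.
rewrite -(sum_cons0 n).
have -> : (\sum_(1 <= i < N) w n i) / (N.-1)%:R - w n j =
   (\sum_(1 <= i < N) (w n i - w n j)) / (N.-1)%:R.
  rewrite sumrB sumr_const_nat subn1 -mulr_natr.
  by field.
rewrite normrM normfV normr_nat.
rewrite ltr_pdivrMr ?ltr0n //.
apply: (le_lt_trans (ler_norm_sum _ _ _)).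
apply: (le_lt_trans (ler_sum_nat (G := fun _ => N%:R * d) _)).
  move=> i hi; apply: hij; lia.
rewrite sumr_const_nat subn1 -mulr_natr mul1r.
have N0 : N%:R != 0 :> R by rewrite pnatr_eq0; lia.
have Nd : N%:R * d = e / 2%:R.
  by rewrite /d natrM; field; rewrite N0.
rewrite Nd.
have N1 : 0 < (N.-1)%:R :> R by rewrite ltr0n.
have : 0 < e / 2%:R * (N.-1)%:R by apply: mulr_gt0 => //; apply: divr_gt0.
have -> : e * (N.-1)%:R = 2%:R * (e / 2%:R * (N.-1)%:R) by field.
lra.
Qed.

End Seq.

Theorem theorem3p5 (R : realType) (N : nat) (tau : R) (u : R -> nat -> R) :
  (2 <= N)%N -> 0 < tau ->
  (* Dirichlet boundary condition at every time t = n tau *)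
  (forall n : nat, u (n%:R * tau) 0%N = 0 /\ u (n%:R * tau) N = 0) ->
  (* the iteration at interior sites *)
  (forall (n j : nat), (1 <= j <= N.-1)%N ->
     u (n.+1%:R * tau) j =
     lattice_step (u (n%:R * tau) j.-1) (u (n%:R * tau) j) (u (n%:R * tau) j.+1)) ->
  (* initial data *)
  (forall j : nat, (1 <= j <= N.-1)%N -> 1 / 2%:R <= u 0 j <= 1) ->
  forall j : nat, (1 <= j <= N.-1)%N ->
    u (n%:R * tau) j @[n --> \oo] -->
      ((\sum_(1 <= i < N) u 0 i) / (N.-1)%:R : R).
Proof.
move=> N2 tau0 hbd hst hin j hj.
pose w := fun n k => u (n%:R * tau) k.
have hinit : forall k, (1 <= k <= N.-1)%N -> inI (w 0%N k).
  by move=> k hk; rewrite /w /inI mul0r; apply: hin.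
have H := @main R N w N2 (fun n => proj1 (hbd n)) (fun n => proj2 (hbd n)) hst hinit j hj.
have -> : \sum_(1 <= i < N) u 0 i = \sum_(1 <= i < N) w 0%N i.
  by apply: eq_bigr => i _; rewrite /w mul0r.
exact: H.
Qed.
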